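(* Let $E$ and $E'$ be strongly independent equations in the unknowns $x_1,\dots,x_n$. Then there exist $k,l\in\{1,\dots,n\}$ with $t_{kl}^{E,E'}\ne0$.
   Context: An equation is a pair $(u,v)$ of words over $\{x_1,\dots,x_n\}$; a solution is a morphism $h:\{x_1,\dots,x_n\}^*\to\{a_1,\dots,a_r\}^*$ with $h(u)=h(v)$; its rank is the dimension of the $\mathbb Q$-span of the vectors $(|h(x_1)|_{a_i},\dots,|h(x_n)|_{a_i})$. $E,E'$ are strongly independent if $E$ has a solution of rank $n-1$ not solving $E'$ and $E'$ has a solution of rank $n-1$ not solving $E$. For $E=(x_{i_1}\cdots x_{i_r},\,x_{j_1}\cdots x_{j_s})$, $S_{E,x_j}=\sum_{a:\,i_a=j}\prod_{t=1}^{a-1}X_{i_t}-\sum_{a:\,j_a=j}\prod_{t=1}^{a-1}X_{j_t}\in\mathbb Z[X_1,\dots,X_n]$ (empty product $=1$), and $t_{kl}^{E,E'}=S_{E,x_k}S_{E',x_l}-S_{E',x_k}S_{E,x_l}$. *)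

(* Defs.v *)
From HB Require Import structures.
From mathcomp Require Import all_boot all_order all_algebra.
Set Implicit Arguments. Unset Strict Implicit. Unset Printing Implicit Defensive.
Import Order.TTheory GRing.Theory Num.Theory.

(* Unknowns x_1..x_n are 'I_n; letters a_1..a_r are 'I_r. *)
Definition word (n : nat) := seq 'I_n.
Definition equation (n : nat) := (word n * word n)%type.

Definition morph_apply n r (h : 'I_n -> seq 'I_r) (w : word n) : seq 'I_r :=
  flatten (map h w).

Definition is_solution n r (h : 'I_n -> seq 'I_r) (E : equation n) : Prop :=
  morph_apply h E.1 = morph_apply h E.2.

Definition parikh_mx n r (h : 'I_n -> seq 'I_r) : 'M[rat]_(r, n) :=
  \matrix_(i < r, j < n) ((count_mem i (h j))%:R : rat).

Definition sol_rank n r (h : 'I_n -> seq 'I_r) : nat := \rank (parikh_mx h).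

Definition strongly_independent n r (E E' : equation n) : Prop :=
  (exists h : 'I_n -> seq 'I_r,
      [/\ is_solution h E, sol_rank h = n.-1 & ~ is_solution h E'])
  /\ (exists h : 'I_n -> seq 'I_r,
      [/\ is_solution h E', sol_rank h = n.-1 & ~ is_solution h E]).

(* Polynomials in Z[X_1..X_n], represented as formal sums of monomials
   (exponent vector, integer coefficient); the polynomial is its
   coefficient function. *)
Definition monom (n : nat) := {ffun 'I_n -> nat}.
Definition mpoly (n : nat) := seq (monom n * int).

Definition mcoeff n (p : mpoly n) (m : monom n) : int :=
  (\sum_(t <- p | t.1 == m) t.2)%R.

Definition mpoly_nonzero n (p : mpoly n) : Prop := exists m, mcoeff p m != 0%R.

Definition madd n (p q : mpoly n) : mpoly n := p ++ q.
Definition mopp n (p : mpoly n) : mpoly n := [seq (t.1, (- t.2)%R) | t <- p].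
Definition msub n (p q : mpoly n) : mpoly n := madd p (mopp q).
Definition mmul n (p q : mpoly n) : mpoly n :=
  [seq ([ffun k => s.1 k + t.1 k] : monom n, (s.2 * t.2)%R) | s : monom n * int <- p, t : monom n * int <- q].

(* monomial prod_{t=1}^{a-1} X_{i_t} for the prefix of length a-1 of w
   (0-indexed: position a, prefix take a w) *)
Definition prefix_monom n (w : word n) (a : nat) : monom n :=
  [ffun k => count_mem k (take a w)].

Definition occ_sum n (w : word n) (j : 'I_n) : mpoly n :=
  [seq (prefix_monom w a, 1%R) | a <- iota 0 (size w) & nth j w a == j].

Definition S_poly n (E : equation n) (j : 'I_n) : mpoly n :=
  msub (occ_sum E.1 j) (occ_sum E.2 j).

Definition t_poly n (E E' : equation n) (k l : 'I_n) : mpoly n :=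
  msub (mmul (S_poly E k) (S_poly E' l)) (mmul (S_poly E' k) (S_poly E l)).

(* Main.v *)
Require Import Defs.
From HB Require Import structures.
From mathcomp Require Import all_boot all_order all_algebra.
From mathcomp Require Import ring zify.
From Stdlib Require Import Classical.
Set Implicit Arguments. Unset Strict Implicit. Unset Printing Implicit Defensive.
Import Order.TTheory GRing.Theory Num.Theory.
Local Open Scope ring_scope.


Section Eval.
Variables (n : nat) (R : comNzRingType) (A : 'I_n -> R).

Definition mono (m : monom n) : R := \prod_k A k ^+ m k.
Definition meval (p : mpoly n) : R := \sum_(t <- p) (t.2)%:~R * mono t.1.

Lemma meval_add p q : meval (madd p q) = meval p + meval q.
Proof. by rewrite /meval /madd big_cat. Qed.

Lemma meval_opp p : meval (mopp p) = - meval p.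
Proof.
rewrite /meval /mopp big_map -sumrN; apply: eq_bigr => t _ /=.
by rewrite intrN mulNr.
Qed.

Lemma meval_sub p q : meval (msub p q) = meval p - meval q.
Proof. by rewrite /msub meval_add meval_opp. Qed.

Lemma mono_add (s t : monom n) :
  mono [ffun k => s k + t k] = mono s * mono t.
Proof.
rewrite /mono -big_split /=; apply: eq_bigr => k _.
by rewrite ffunE exprD.
Qed.

Lemma meval_mul p q : meval (mmul p q) = meval p * meval q.
Proof.
rewrite /meval /mmul big_allpairs_dep mulr_suml; apply: eq_bigr => s _.
rewrite mulr_sumr; apply: eq_bigr => t _ /=.
rewrite mono_add intrM; ring.
Qed.

Lemma sum_if_eq (s : seq (monom n)) x (F : monom n -> R) :
  uniq s -> x \in s -> \sum_(m <- s) (if m == x then F m else 0) = F x.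
Proof.
move=> us xs; rewrite -big_mkcond -big_filter.
have -> : [seq m <- s | m == x] = [:: x].
  by rewrite -(filter_pred1_uniq us xs); apply: eq_filter.
by rewrite big_seq1.
Qed.

Lemma meval_decomp p (s : seq (monom n)) :
  uniq s -> (forall t, t \in p -> t.1 \in s) ->
  meval p = \sum_(m <- s) (mcoeff p m)%:~R * mono m.
Proof.
move=> us; elim: p => [|t p IH] H.
  by rewrite /meval big_nil big1 // => m _; rewrite /mcoeff big_nil mul0r.
rewrite /meval big_cons -/(meval p) IH; last by move=> u up; apply: H; rewrite inE up orbT.
have -> : \sum_(m <- s) (mcoeff (t :: p) m)%:~R * mono m
   = \sum_(m <- s) ((if m == t.1 then t.2%:~R * mono m else 0)
       + (\sum_(t0 <- p | t0.1 == m) t0.2)%:~R * mono m).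
  apply: eq_bigr => m _; rewrite /mcoeff big_cons (eq_sym m); case: ifP => _; last by rewrite add0r.
  by rewrite intrD mulrDl.
rewrite big_split /= sum_if_eq //; last by apply: H; exact: mem_head.
Qed.

Lemma meval_zero p : (forall m, mcoeff p m = 0) -> meval p = 0.
Proof.
move=> H; rewrite (@meval_decomp p (undup [seq t.1 | t <- p])).
- by rewrite big1 // => m _; rewrite H mul0r.
- exact: undup_uniq.
- by move=> t tp; rewrite mem_undup; apply: map_f.
Qed.

Definition occv (w : word n) (j : 'I_n) : R :=
  foldr (fun b acc => (b == j)%:R + A b * acc) 0 w.

Lemma meval_occ_sum w j :
  meval (occ_sum w j) = \sum_(a <- iota 0 (size w) | nth j w a == j) mono (prefix_monom w a).
Proof.
rewrite /meval /occ_sum big_map big_filter; apply: eq_bigr => a _ /=.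
by rewrite mul1r.
Qed.

Lemma mono_prefix0 w : mono (prefix_monom w 0) = 1.
Proof. by rewrite /mono big1 // => k _; rewrite ffunE take0. Qed.

Lemma mono_prefixS b w a :
  mono (prefix_monom (b :: w) a.+1) = A b * mono (prefix_monom w a).
Proof.
rewrite /mono (bigD1 b) //= [in RHS](bigD1 b) //= ffunE /= eqxx ffunE exprS mulrA.
congr (_ * _); apply: eq_bigr => k kb; rewrite !ffunE /= eq_sym (negbTE kb) //.
Qed.

Lemma meval_occ w j : meval (occ_sum w j) = occv w j.
Proof.
elim: w => [|b w IH]; first by rewrite meval_occ_sum big_nil.
rewrite meval_occ_sum /= big_cons /= mono_prefix0.
rewrite -[1%N]addn0 iotaDl big_map -IH meval_occ_sum mulr_sumr.
have -> : \sum_(i <- iota 0 (size w) | nth j (b :: w) (1 + i) == j)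
      mono (prefix_monom (b :: w) (1 + i))
    = \sum_(i <- iota 0 (size w) | nth j w i == j) A b * mono (prefix_monom w i).
  by apply: eq_bigr => i _; rewrite add1n mono_prefixS.
by case: (b == j); rewrite ?add0r.
Qed.

Lemma meval_S (E : equation n) j :
  meval (S_poly E j) = occv E.1 j - occv E.2 j.
Proof. by rewrite /S_poly meval_sub !meval_occ. Qed.

Lemma meval_t (E E' : equation n) k l :
  meval (t_poly E E' k l) =
  (occv E.1 k - occv E.2 k) * (occv E'.1 l - occv E'.2 l)
  - (occv E'.1 k - occv E'.2 k) * (occv E.1 l - occv E.2 l).
Proof. by rewrite /t_poly meval_sub !meval_mul !meval_S. Qed.

End Eval.


Definition Fw r (w : seq 'I_r) : {poly rat} :=
  foldr (fun (a : 'I_r) p => (a.+1)%:R%:P + 'X * p) 0 w.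

Lemma Fw_cat r (w1 w2 : seq 'I_r) : Fw (w1 ++ w2) = Fw w1 + 'X^(size w1) * Fw w2.
Proof.
elim: w1 => [|a w IH] /=; first by rewrite add0r expr0 mul1r.
rewrite IH exprS; ring.
Qed.

Lemma Fw_coef0 r (a : 'I_r) w : (Fw (a :: w))`_0 = (a.+1)%:R.
Proof. by rewrite /= coefD coefC coefXM /= addr0. Qed.

Lemma Fw_coefS r (a : 'I_r) w i : (Fw (a :: w))`_i.+1 = (Fw w)`_i.
Proof. by rewrite /= coefD coefC coefXM /= add0r. Qed.

Lemma Fw_inj r : injective (@Fw r).
Proof.
elim => [|a w IH] [|b v] // H.
- have := congr1 (fun p : {poly rat} => p`_0) H; rewrite /= Fw_coef0 coef0 => /eqP.
  by rewrite eq_sym pnatr_eq0.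
- have := congr1 (fun p : {poly rat} => p`_0) H; rewrite /= Fw_coef0 coef0 => /eqP.
  by rewrite pnatr_eq0.
- have := congr1 (fun p : {poly rat} => p`_0) H; rewrite !Fw_coef0 => /eqP.
  rewrite eqr_nat eqSS => /eqP ab.
  have -> : a = b by apply: val_inj.
  congr (_ :: _); apply: IH; apply/polyP => i.
  by have := congr1 (fun p : {poly rat} => p`_i.+1) H; rewrite !Fw_coefS.
Qed.

Lemma occv_cons n (R : comNzRingType) (A : 'I_n -> R) b w j :
  occv A (b :: w) j = (b == j)%:R + A b * occv A w j.
Proof. by []. Qed.

Section Key.
Variables (n r : nat) (h : 'I_n -> seq 'I_r).

Definition Ah (j : 'I_n) : {poly rat} := 'X^(size (h j)).

Lemma Fw_morph u :
  Fw (morph_apply h u) = \sum_j occv Ah u j * Fw (h j).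
Proof.
elim: u => [|b u IH]; first by rewrite /morph_apply /= big1 // => j _; rewrite mul0r.
rewrite /morph_apply /= Fw_cat -/(morph_apply h u) IH.
have -> : Fw (h b) = \sum_j (b == j)%:R * Fw (h j).
  rewrite (bigD1 b) //= eqxx mul1r big1 ?addr0 // => j jb.
  by rewrite eq_sym (negbTE jb) mul0r.
rewrite mulr_sumr -big_split /=; apply: eq_bigr => j _.
by rewrite mulrDl mulrA.
Qed.

Lemma occv_coef0 b w j :
  (occv Ah (b :: w) j)`_0 = (b == j)%:R + (size (h b) == 0%N)%:R * (occv Ah w j)`_0.
Proof.
rewrite /= coefD -polyC_natr coefC /= /Ah coefXnM.
by case: (size (h b)) => [|k] //=; rewrite ?mul1r ?mul0r.
Qed.

Lemma occv_coef0_ge0 w j : 0 <= (occv Ah w j)`_0.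
Proof.
elim: w => [|b w IH]; first by rewrite /= coef0.
by rewrite occv_coef0 addr_ge0 ?mulr_ge0 ?ler0n.
Qed.

Hypothesis empty_uniq : forall i1 i2, h i1 = [::] -> h i2 = [::] -> i1 = i2.

Lemma occv_inj u v : (forall j, occv Ah u j = occv Ah v j) -> u = v.
Proof.
elim: u v => [|a u IH] [|b v] // H.
- have := congr1 (fun p : {poly rat} => p`_0) (H b); rewrite occv_coef0 eqxx /= coef0 => /eqP.
  by rewrite eq_sym paddr_eq0 ?ler01 ?mulr_ge0 ?ler0n ?occv_coef0_ge0 // oner_eq0.
- have := congr1 (fun p : {poly rat} => p`_0) (H a); rewrite occv_coef0 eqxx /= coef0 => /eqP.
  by rewrite paddr_eq0 ?ler01 ?mulr_ge0 ?ler0n ?occv_coef0_ge0 // oner_eq0.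
- case: (eqVneq a b) => [eab|ab].
    subst b.
    congr (_ :: _); apply: IH => j; have := H j; rewrite !occv_cons => E.
    have nz : Ah a != 0 by rewrite /Ah expf_neq0 // polyX_eq0.
    exact: (mulfI nz (addrI _ E)).
  case: (eqVneq (size (h b)) 0%N) => hb.
    have ha : size (h a) != 0%N.
      apply/negP => /eqP ha0.
      have ha := size0nil ha0; have hb' := size0nil hb.
      by move: ab; rewrite (empty_uniq ha hb') eqxx.
    have := congr1 (fun p : {poly rat} => p`_0) (H b); rewrite !occv_coef0 (negbTE ab) (negbTE ha) eqxx /=.
    rewrite mul0r addr0 => /eqP; rewrite eq_sym.
    by rewrite paddr_eq0 ?ler01 ?mulr_ge0 ?ler0n ?occv_coef0_ge0 // oner_eq0.
  have := congr1 (fun p : {poly rat} => p`_0) (H a); rewrite !occv_coef0 (eq_sym b a) (negbTE ab) (negbTE hb) eqxx /=.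
  rewrite mul0r addr0 => /eqP.
  by rewrite paddr_eq0 ?ler01 ?mulr_ge0 ?ler0n ?occv_coef0_ge0 // oner_eq0.
Qed.

End Key.


Lemma rank_sum (F : fieldType) m k (I : Type) (s : seq I) (Pr : pred I)
   (M : I -> 'M[F]_(m, k)) :
  (\rank (\sum_(i <- s | Pr i) M i)%R <= \sum_(i <- s | Pr i) \rank (M i))%N.
Proof.
elim/big_rec2: _ => [|i y1 y2 _ H]; first by rewrite mxrank0.
exact: leq_trans (mxrank_add _ _) (leq_add (leqnn _) H).
Qed.

Lemma two_empty_rank n r (h : 'I_n -> seq 'I_r) i1 i2 :
  i1 != i2 -> h i1 = [::] -> h i2 = [::] -> (sol_rank h <= n - 2)%N.
Proof.
move=> i12 h1 h2; rewrite /sol_rank.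
set P := parikh_mx h.
have zc j : h j = [::] -> P *m delta_mx j j = 0.
  move=> hj; apply/matrixP => a b; rewrite !mxE big1 // => l _.
  rewrite !mxE; case: (eqVneq l j) => [->|_]; first by rewrite hj mul0r.
  by rewrite /= mulr0.
have -> : P = \sum_j P *m delta_mx j j by rewrite -mulmx_sumr -mx1_sum_delta mulmx1.
apply: leq_trans (rank_sum _ _ _) _.
pose g (j : 'I_n) : nat := ((j != i1) && (j != i2)).
apply: (@leq_trans (\sum_j g j)).
  apply: leq_sum => j _; rewrite /g.
  case: (eqVneq j i1) => [->|_]; first by rewrite zc // mxrank0.
  case: (eqVneq j i2) => [->|_]; first by rewrite zc // mxrank0.
  by rewrite /= (leq_trans (mxrankM_maxr _ _)) // mxrank_delta.
have Hn : n = (\sum_(j < n) (j == i1 : nat) + \sum_(j < n) (j == i2 : nat) + \sum_j g j)%N.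
  rewrite -!big_split /= -{1}[n]card_ord -sum1_card; apply: eq_bigr => j _.
  rewrite /g; case: (eqVneq j i1) => [->|]; first by rewrite (negbTE i12).
  by case: (eqVneq j i2).
have s1 i : (\sum_(j < n) (j == i : nat) = 1)%N.
  by rewrite (bigD1 i) //= eqxx big1 // => j /negbTE ->.
move: Hn; rewrite !s1; set S := \sum_j g j; lia.
Qed.


Theorem lemma4p3 (n r : nat) (E E' : equation n) :
  strongly_independent r E E' ->
  exists k l : 'I_n, mpoly_nonzero (t_poly E E' k l).
Proof.
case: E => u v; case: E' => u' v'.
move=> [[h [solE rk nsolE']] [h' [solE' _ nsolE]]].
apply: NNPP => Hno.
have tz k l : meval (Ah h) (t_poly (u, v) (u', v') k l) = 0.
  apply: meval_zero => m; case: (eqVneq (mcoeff (t_poly (u, v) (u', v') k l) m) 0) => // nz.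
  by exfalso; apply: Hno; exists k, l, m.
have uv : u <> v by move=> euv; apply: nsolE; rewrite /is_solution /= euv.
have eu : forall i1 i2, h i1 = [::] -> h i2 = [::] -> i1 = i2.
  move=> i1 i2 h1 h2; case: (eqVneq i1 i2) => // i12; exfalso.
  have := two_empty_rank i12 h1 h2; rewrite rk.
  have n2 : (2 <= n)%N.
    case: (leqP 2 n) => // n1; move: i12; suff -> : i1 = i2 by rewrite eqxx.
    apply: val_inj; have := ltn_ord i1; have := ltn_ord i2; simpl; lia.
  lia.
pose s j := occv (Ah h) u j - occv (Ah h) v j.
pose s' j := occv (Ah h) u' j - occv (Ah h) v' j.
have tz' k l : s k * s' l = s' k * s l.
  by apply/eqP; rewrite -subr_eq0; have := tz k l; rewrite meval_t /= => ->.
case: (pickP (fun k => s k != 0)) => [k sk | all0]; last first.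
  apply: uv; apply: (occv_inj eu) => j; apply/eqP; rewrite -subr_eq0.
  by have := all0 j; rewrite /= => /negbFE.
have FE : \sum_j s j * Fw (h j) = 0.
  rewrite /s; under eq_bigr => j _ do rewrite mulrBl.
  by rewrite sumrB -!Fw_morph solE subrr.
apply: nsolE'; rewrite /is_solution /=; apply: Fw_inj; apply/eqP.
rewrite !Fw_morph -subr_eq0 -sumrB.
have -> : \sum_j (occv (Ah h) u' j * Fw (h j) - occv (Ah h) v' j * Fw (h j))
   = \sum_j s' j * Fw (h j) by apply: eq_bigr => j _; rewrite mulrBl.
have : s k * \sum_j s' j * Fw (h j) = 0.
  rewrite mulr_sumr (eq_bigr (fun j => s' k * (s j * Fw (h j)))).
    by rewrite -mulr_sumr FE mulr0.
  by move=> j _; rewrite !mulrA tz'.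
by move/eqP; rewrite mulf_eq0 (negbTE sk).
Qed.
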